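(* Let $S$ be a monoid whose unique maximal right ideal $\mathfrak{M}$ is two-sided, and let $A$ be a finitely generated quasi-strongly faithful right $S$-act. If $X$ and $Y$ are minimal generating sets for $A$, then $|X|=|Y|$.
   Context: $S$ is a monoid with identity $1$ having at least one right non-invertible element. A (right) $S$-act is a nonempty set with an action $(a,s)\mapsto as$, $a1=a$, $a(st)=(as)t$. $X\subseteq A$ generates $A$ if $A=\bigcup_{x\in X}xS$; it is minimal if no proper subset generates $A$; $A$ is finitely generated if it has a finite generating set. $\mathfrak{M}=\{s\in S\mid st\neq1\ \forall t\in S\}$ is the unique maximal right ideal. $A$ is quasi-strongly faithful if for $a\in A$ (with $a\neq\theta$ when $A$ has a unique zero $\theta$, i.e. $\theta s=\theta$ for all $s$) and $s\in S$, $as=a$ implies $s\notin\mathfrak{M}$. *)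

(* Defs.v *)
From Stdlib Require Import List.

Set Implicit Arguments.

Definition is_monoid (S : Type) (mul : S -> S -> S) (one : S) : Prop :=
  (forall x y z, mul x (mul y z) = mul (mul x y) z) /\
  (forall x, mul one x = x) /\ (forall x, mul x one = x).

Definition right_invertible (S : Type) (mul : S -> S -> S) (one : S) (s : S) : Prop :=
  exists t, mul s t = one.

Definition maxRideal (S : Type) (mul : S -> S -> S) (one : S) (s : S) : Prop :=
  forall t, mul s t <> one.

Definition two_sided (S : Type) (mul : S -> S -> S) (P : S -> Prop) : Prop :=
  (forall s t, P s -> P (mul s t)) /\ (forall s t, P s -> P (mul t s)).

Definition is_right_act (S A : Type) (mul : S -> S -> S) (one : S)
  (act : A -> S -> A) : Prop :=
  inhabited A /\ (forall a, act a one = a) /\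
  (forall a s t, act a (mul s t) = act (act a s) t).

Definition generates (S A : Type) (act : A -> S -> A) (X : A -> Prop) : Prop :=
  forall a, exists x s, X x /\ act x s = a.

Definition minimal_generating (S A : Type) (act : A -> S -> A) (X : A -> Prop) : Prop :=
  generates act X /\
  forall Y : A -> Prop, (forall a, Y a -> X a) -> generates act Y ->
    forall a, X a -> Y a.

Definition finitely_generated (S A : Type) (act : A -> S -> A) : Prop :=
  exists l : list A, generates act (fun a => In a l).

Definition is_zero (S A : Type) (act : A -> S -> A) (theta : A) : Prop :=
  forall s, act theta s = theta.

Definition is_unique_zero (S A : Type) (act : A -> S -> A) (theta : A) : Prop :=
  is_zero act theta /\ forall b, is_zero act b -> b = theta.

Definition quasi_strongly_faithful (S A : Type) (mul : S -> S -> S) (one : S)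
  (act : A -> S -> A) : Prop :=
  forall (a : A) (s : S), ~ is_unique_zero act a -> act a s = a ->
    ~ maxRideal mul one s.

Definition same_card (A : Type) (X Y : A -> Prop) : Prop :=
  exists (f : {x | X x} -> {y | Y y}) (g : {y | Y y} -> {x | X x}),
    (forall x, g (f x) = x) /\ (forall y, f (g y) = y).

(* Main.v *)
Require Import Defs.
From Stdlib Require Import List Classical ClassicalEpsilon ProofIrrelevance.

Section Aux.
Variables (S A : Type) (mul : S -> S -> S) (one : S) (act : A -> S -> A).
Hypothesis HA : is_right_act mul one act.

Lemma key (Z : A -> Prop) (HZ : minimal_generating act Z) z z' s :
  Z z -> Z z' -> act z' s = z -> z = z'.
Proof.
  intros Zz Zz' Hs. destruct (classic (z = z')) as [e|ne]; [exact e|].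
  exfalso. destruct HZ as [Hg Hmin]. destruct HA as [_ [_ Hm]].
  assert (H := Hmin (fun a => Z a /\ a <> z) (fun a h => proj1 h)).
  refine (proj2 (H _ z Zz) eq_refl).
  intro a. destruct (Hg a) as [w [r [Zw Hw]]].
  destruct (classic (w = z)) as [->|wn].
  - exists z', (mul s r). split; [split; auto|]. rewrite Hm, Hs; exact Hw.
  - exists w, r. auto.
Qed.

Definition R x y := (exists s, act x s = y) /\ (exists t, act y t = x).

Lemma uniq (Z : A -> Prop) (HZ : minimal_generating act Z) x y y' :
  Z y -> Z y' -> R x y -> R x y' -> y = y'.
Proof.
  intros Zy Zy' [[a Ha] [b Hb]] [[a' Ha'] [b' Hb']].
  destruct HA as [_ [_ Hm]].
  symmetry; apply (key _ HZ y' y (mul b a')); auto. rewrite Hm, Hb; exact Ha'.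
Qed.
End Aux.
Arguments R {S A} act x y.
Arguments key {S A mul one act} HA Z HZ z z' s _ _ _.
Arguments uniq {S A mul one act} HA Z HZ x y y' _ _ _ _.

Theorem corollary3p5 (S A : Type) (mul : S -> S -> S) (one : S)
  (act : A -> S -> A)
  (HS : is_monoid mul one)
  (Hnoninv : exists s : S, ~ right_invertible mul one s)
  (HA : is_right_act mul one act)
  (HM : two_sided mul (maxRideal mul one))
  (Hfg : finitely_generated act)
  (Hqsf : quasi_strongly_faithful mul one act)
  (X Y : A -> Prop)
  (HX : minimal_generating act X) (HY : minimal_generating act Y) :
  same_card X Y.
Proof.
  assert (Hm := proj2 (proj2 HA)). assert (H1 := proj1 (proj2 HA)).
  assert (ex : forall (X Y : A -> Prop), minimal_generating act X ->
            minimal_generating act Y -> forall x, X x -> exists y, Y y /\ R act x y).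
  { clear -HA HM Hqsf Hm H1. intros X Y HX HY x Xx.
    destruct (proj1 HY x) as [y [s [Yy Hs]]].
    destruct (proj1 HX y) as [x' [t [Xx' Ht]]].
    assert (E : act x' (mul t s) = x) by (rewrite Hm, Ht; exact Hs).
    assert (x = x') by (apply (key HA _ HX x x' (mul t s)); auto). subst x'.
    exists y. split; [exact Yy|].
    destruct (classic (is_unique_zero act x)) as [Z|NZ].
    - assert (y = x) by (rewrite <- Ht; apply (proj1 Z)). rewrite H.
      split; exists one; apply H1.
    - assert (Hn := Hqsf x (mul t s) NZ E).
      assert (Hs' : ~ maxRideal mul one s).
      { intro Ms. apply Hn. apply (proj2 HM). exact Ms. }
      apply not_all_not_ex in Hs'. destruct Hs' as [v Hv].
      try apply NNPP in Hv.
      split; [exists v | exists s; exact Hs].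
      rewrite <- Hs, <- Hm, Hv. apply H1. }
  assert (Rsym : forall x y, R act x y -> R act y x) by (intros x y [a b]; split; assumption).
  pose (f := fun x : {x | X x} =>
    let (y, Hy) := constructive_indefinite_description _ (ex X Y HX HY _ (proj2_sig x)) in
    exist Y y (proj1 Hy)).
  pose (g := fun y : {y | Y y} =>
    let (x, Hx) := constructive_indefinite_description _ (ex Y X HY HX _ (proj2_sig y)) in
    exist X x (proj1 Hx)).
  assert (Rf : forall x, R act (proj1_sig x) (proj1_sig (f x))).
  { intro x. unfold f. destruct constructive_indefinite_description as [y [Yy Ry]]. exact Ry. }
  assert (Rg : forall y, R act (proj1_sig y) (proj1_sig (g y))).
  { intro y. unfold g. destruct constructive_indefinite_description as [x [Xx Rx]]. exact Rx. }
  exists f, g. split.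
  - intros [x Xx]. apply eq_sig_hprop; [intros; apply proof_irrelevance|].
    simpl. apply (uniq HA _ HX (proj1_sig (f (exist X x Xx))) _ _).
    + apply (proj2_sig (g _)).
    + exact Xx.
    + apply Rg.
    + apply Rsym, (Rf (exist X x Xx)).
  - intros [y Yy]. apply eq_sig_hprop; [intros; apply proof_irrelevance|].
    simpl. apply (uniq HA _ HY (proj1_sig (g (exist Y y Yy))) _ _).
    + apply (proj2_sig (f _)).
    + exact Yy.
    + apply Rf.
    + apply Rsym, (Rg (exist Y y Yy)).
Qed.
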